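(* Let $d\ge404$ and $k$ an integer with $d/2+1<k\le d/2+\frac16\log d$. Then for every $x>1$, $$\frac{(x+1)f'(x)}{k}<\big(1+\eta(x)\big)f(x).$$
   Context: $f(x)=\binom dk^{-1}\sum_{i=0}^{d-k}\binom ki\binom{d-k}{i}x^{k-i}$ and $\eta(x)=\dfrac{2k-d}{d-k+\sqrt{(d-k)^2+d(2k-d)f(x)}}$; $\log$ is the natural logarithm. *)

(* Defs.v *)
From HB Require Import structures.
From mathcomp Require Import all_boot all_order all_algebra.
From mathcomp Require Import all_classical all_reals all_analysis.
Set Implicit Arguments. Unset Strict Implicit. Unset Printing Implicit Defensive.
Import Order.TTheory GRing.Theory Num.Theory.
Local Open Scope ring_scope.

Definition fdk {R : realType} (d k : nat) (x : R) : R :=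
  ('C(d, k)%:R)^-1 *
  \sum_(i < (d - k).+1) ('C(k, i)%:R * 'C(d - k, i)%:R * x ^+ (k - i)).

Definition etadk {R : realType} (d k : nat) (x : R) : R :=
  (2 * k%:R - d%:R) /
  ((d%:R - k%:R) + Num.sqrt ((d%:R - k%:R) ^+ 2 + d%:R * (2 * k%:R - d%:R) * fdk d k x)).

(* Main.v *)
Require Import Defs.
From HB Require Import structures.
From mathcomp Require Import all_boot all_order all_algebra.
From mathcomp Require Import all_classical all_reals all_analysis.
From mathcomp Require Import ring lra zify.
Import Order.TTheory GRing.Theory Num.Theory.

Lemma bin_swap k i n : 'C(k, i) * 'C(k - i, n) = 'C(k, n) * 'C(k - n, i).
Proof.
have [le|lt] := leqP (i + n) k.
- have hi : i <= k by apply: leq_trans le; apply: leq_addr.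
  have hn : n <= k by apply: leq_trans le; apply: leq_addl.
  have h1 : n <= k - i by rewrite leq_subRL.
  have h2 : i <= k - n by rewrite leq_subRL // addnC.
  have e : k - i - n = k - n - i by rewrite -!subnDA addnC.
  have P : 0 < i`! * n`! * (k - i - n)`! by rewrite !muln_gt0 !fact_gt0.
  apply/eqP; rewrite -(eqn_pmul2r P).
  have A := bin_fact hi. have B := bin_fact h1.
  have C := bin_fact hn. have D := bin_fact h2.
  have E1 : 'C(k, i) * 'C(k - i, n) * (i`! * n`! * (k - i - n)`!) = k`!.
    by rewrite -A -B; ring.
  have E2 : 'C(k, n) * 'C(k - n, i) * (i`! * n`! * (k - i - n)`!) = k`!.
    by rewrite e -C -D; ring.
  by rewrite E1 E2.
- have [hi|hi] := leqP i k.
  + rewrite (@bin_small (k - i) n); last by rewrite ltn_subLR // addnC.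
    have [hn|hn] := leqP n k.
    * by rewrite (@bin_small (k - n) i) ?muln0 //; lia.
    * by rewrite (@bin_small k n) ?muln0 ?mul0n.
  + rewrite (@bin_small k i) //.
    have [hn|hn] := leqP n k.
    * rewrite (@bin_small (k - n) i) ?muln0 //.
      by apply: leq_ltn_trans (leq_subr _ _) hi.
    * by rewrite (@bin_small k n).
Qed.

Lemma vand_id k m n :
  \sum_(i < m.+1) 'C(k, i) * 'C(m, i) * 'C(k - i, n) = 'C(k, n) * 'C(k + m - n, m).
Proof.
have [hn|hn] := leqP n k; last first.
  rewrite (@bin_small k n) // mul0n big1 // => i _.
  by rewrite (@bin_small (k - i) n) ?muln0 //; lia.
transitivity (\sum_(i < m.+1) 'C(k, n) * ('C(k - n, i) * 'C(m, m - i))).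
  apply: eq_bigr => i _; rewrite bin_sub; last by rewrite -ltnS.
  by rewrite mulnAC bin_swap mulnA mulnAC.
rewrite -big_distrr /= binomial.Vandermonde; congr (_ * binomial _ _); lia.
Qed.

Local Open Scope ring_scope.

Definition cc {R : realType} (d k n : nat) : R := ('C(k, n) * 'C(d - n, d - k))%:R / ('C(d, k))%:R.

Lemma Cdk_pos {R : realType} (d k : nat) : (k <= d)%N -> (0 : R) < ('C(d, k))%:R.
Proof. by move=> h; rewrite ltr0n bin_gt0. Qed.

Lemma cc0 {R : realType} (d k : nat) : (k <= d)%N -> cc d k 0 = 1 :> R.
Proof.
move=> h; rewrite /cc bin0 mul1n subn0 bin_sub // divff //.
by apply/lt0r_neq0/Cdk_pos.
Qed.

Lemma cc_ge0 {R : realType} (d k n : nat) : 0 <= cc d k n :> R.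
Proof. by rewrite /cc divr_ge0. Qed.

Lemma cc1_pos {R : realType} (d k : nat) : (0 < k)%N -> (k < d)%N -> 0 < cc d k 1 :> R.
Proof.
move=> h0 h1; rewrite /cc divr_gt0 //; last exact: Cdk_pos (ltnW h1).
rewrite ltr0n muln_gt0 !bin_gt0 h0 /=; exact: leq_sub2l.
Qed.

Lemma cc_big {R : realType} (d k n : nat) : (k < n)%N -> cc d k n = 0 :> R.
Proof. by move=> h; rewrite /cc bin_small // mul0n mul0r. Qed.

Lemma cc_rec {R : realType} (d k j : nat) : (k < d)%N -> (j <= k)%N ->
  j.+1%:R * (d%:R - j%:R) * @cc R d k j.+1 = (k%:R - j%:R) ^+ 2 * @cc R d k j.
Proof.
move=> hkd hj; rewrite /cc !mulrA -!natrB //; last by lia.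
rewrite -!natrM -natrX -natrM; congr (_%:R / _).
have e1 := mul_bin_left k j.
have e2 := mul_bin_down (d - j) (d - k).
have -> : (d - j.+1 = (d - j).-1)%N by lia.
have e3 : (d - j - (d - k) = k - j)%N by lia.
rewrite e3 in e2.
rewrite expnS expn1.
transitivity ((j.+1 * 'C(k, j.+1)) * ((d - j) * 'C((d - j).-1, d - k)))%N; first by ring.
by rewrite e1 e2; ring.
Qed.



Lemma widen_sum {R : realType} (F : nat -> R) a b : (a <= b)%N -> (forall j, (a <= j)%N -> F j = 0) ->
  \sum_(j < a) F j = \sum_(j < b) F j.
Proof.
move=> hab hF; rewrite (big_ord_widen _ _ hab) big_mkcond /=.
apply: eq_bigr => j _; case: ifP => // /negbT; rewrite -leqNgt => h.
by rewrite hF.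
Qed.

Lemma expand_pow {R : realType} (y : R) (N M : nat) (e : nat -> nat) (b : nat -> R) :
  (forall i, (i < M)%N -> (e i <= N)%N) ->
  \sum_(i < M) b i * (1 + y) ^+ e i =
  \sum_(j < N.+1) (\sum_(i < M) b i * ('C(e i, j))%:R) * y ^+ j.
Proof.
move=> he.
transitivity (\sum_(i < M) \sum_(j < N.+1) b i * ('C(e i, j))%:R * y ^+ j).
  apply: eq_bigr => i _.
  rewrite addrC exprD1n big_distrr /=.
  rewrite (@widen_sum _ (fun j => b i * (y ^+ j *+ 'C(e i, j))) (e i).+1 N.+1) //.
  - by apply: eq_bigr => j _; rewrite -mulr_natl mulrA.
  - by rewrite ltnS he.
  - by move=> j hj; rewrite bin_small // mulr0n mulr0.
rewrite exchange_big /=; apply: eq_bigr => j _; rewrite big_distrl /=.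
by apply: eq_bigr.
Qed.


Lemma fdk_y {R : realType} (d k : nat) (y : R) : (k <= d)%N ->
  fdk d k (1 + y) = \sum_(j < k.+1) cc d k j * y ^+ j.
Proof.
move=> hkd; rewrite /fdk.
rewrite (@expand_pow _ y k (d - k).+1 (fun i => (k - i)%N)
   (fun i => ('C(k, i))%:R * ('C(d - k, i))%:R)); last by move=> i _; apply: leq_subr.
rewrite big_distrr /=; apply: eq_bigr => j _.
rewrite mulrA; congr (_ * _).
rewrite /cc mulrC; congr (_ * _).
have -> : (d - j = k + (d - k) - j)%N by lia.
rewrite -vand_id natr_sum.
by apply: eq_bigr => i _; rewrite !natrM.
Qed.

Lemma fdk_horner {R : realType} (d k : nat) : fdk d k = horner (('C(d, k)%:R : R)^-1 *:
   \sum_(i < (d - k).+1) (('C(k, i)%:R * 'C(d - k, i)%:R) *: 'X^(k - i))).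
Proof.
apply/funext => x; rewrite /fdk hornerZ horner_sum; congr (_ * _).
by apply: eq_bigr => i _; rewrite hornerZ hornerXn.
Qed.

Lemma derive_fdk {R : realType} (d k : nat) (x : R) : derive1 (fdk d k) x =
  ('C(d, k)%:R)^-1 * \sum_(i < (d - k).+1)
     (('C(k, i)%:R * 'C(d - k, i)%:R * (k - i)%:R) * x ^+ (k - i).-1).
Proof.
rewrite fdk_horner -derivE derivZ raddf_sum hornerZ horner_sum; congr (_ * _).
apply: eq_bigr => i _; rewrite /= derivZ derivXn hornerZ hornerMn hornerXn.
by rewrite -[x ^+ _ *+ _]mulr_natl mulrA.
Qed.

Lemma derive_fdk_y {R : realType} (d k : nat) (y : R) : (k <= d)%N ->
  derive1 (fdk d k) (1 + y) = \sum_(j < k.+1) (j.+1)%:R * cc d k j.+1 * y ^+ j.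
Proof.
move=> hkd; rewrite derive_fdk.
rewrite (@expand_pow _ y k (d - k).+1 (fun i => (k - i).-1)
   (fun i => ('C(k, i))%:R * ('C(d - k, i))%:R * (k - i)%:R)); last first.
  by move=> i _; lia.
rewrite big_distrr /=; apply: eq_bigr => j _.
rewrite mulrA; congr (_ * _).
rewrite /cc mulrC mulrA; congr (_ * _).
have -> : (d - j.+1 = k + (d - k) - j.+1)%N by lia.
rewrite -vand_id natr_sum big_distrr /=.
apply: eq_bigr => i _; rewrite -!natrM; congr (_%:R).
by rewrite -mulnA mul_bin_diag mulnCA mulnA.
Qed.



Lemma LB {R : realType} (phi : nat -> R) (T : R) (N L : nat) :
  (L < N)%N -> T <= L.+1%:R -> (forall j, (j <= N)%N -> 0 <= phi j) ->
  (forall j, (j < L)%N -> T * phi j <= j.+1%:R * phi j.+1) ->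
  T * phi L + (T - L.+1%:R) * phi L.+1 <= 0 ->
  \sum_(j < N.+1) (T - j%:R) * phi j <= 0.
Proof.
move=> hLN hT hpos hstep hlast.
have claim : forall j, (j <= L)%N -> \sum_(i < j.+1) (T - i%:R) * phi i <= T * phi j.
  elim=> [|j IH] hj; first by rewrite big_ord_recr big_ord0 /= add0r subr0.
  rewrite big_ord_recr /=.
  have := IH (ltnW hj); have := hstep j hj; lra.
rewrite -(big_mkord xpredT (fun j => (T - j%:R) * phi j)).
rewrite (@big_cat_nat _ _ _ L.+1) //=; last by rewrite ltnS ltnW.
rewrite big_mkord.
have H1 := claim L (leqnn L).
rewrite big_ltn ?ltnS //=.
have H2 : \sum_(L.+2 <= i < N.+1) (T - i%:R) * phi i <= 0.
  rewrite big_seq_cond; apply: sumr_le0 => i; rewrite andbT mem_index_iota => /andP[h1 h2].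
  apply: mulr_le0_ge0; last by apply: hpos; rewrite -ltnS.
  rewrite subr_le0; apply: le_trans hT _; rewrite ler_nat; exact: ltnW.
lra.
Qed.

Lemma N1 {R : realType} (T D : R) : 3 <= T -> 75 * T <= D ->
  D * (D - 1) * (3 * T + 1) <= 2 * (D - 5 * T) * (D - 5 * T - 2) * (2 * T + 1).
Proof.
move=> h1 h2.
have e : 2 * (D - 5 * T) * (D - 5 * T - 2) * (2 * T + 1) - D * (D - 1) * (3 * T + 1)
  = D * ((T + 1) * D - (40 * T ^+ 2 + 25 * T + 3)) + 10 * T * (2 * T + 1) * (5 * T + 2) by ring.
have a : 0 <= (T + 1) * D - (40 * T ^+ 2 + 25 * T + 3) by nra.
have b : 0 <= D * ((T + 1) * D - (40 * T ^+ 2 + 25 * T + 3)) by apply: mulr_ge0 => //; lra.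
have c : 0 <= 10 * T * (2 * T + 1) * (5 * T + 2) by apply: mulr_ge0; [apply: mulr_ge0|]; lra.
lra.
Qed.

Lemma Hs_id {R : realType} (d k : nat) (y : R) : (k < d)%N ->
  (y + 2) * (\sum_(j < k.+1) j.+1%:R * cc d k j.+1 * y ^+ j) - k%:R * (\sum_(j < k.+1) cc d k j * y ^+ j)
  = \sum_(j < k.+1) ((k%:R - j%:R) * ((2 * k%:R - d%:R) - j%:R) / (d%:R - j%:R)) * (cc d k j * y ^+ j).
Proof.
move=> hkd.
have sh : y * (\sum_(j < k.+1) j.+1%:R * @cc R d k j.+1 * y ^+ j) =
    \sum_(j < k.+1) j%:R * @cc R d k j * y ^+ j.
  transitivity (\sum_(j < k.+2) j%:R * @cc R d k j * y ^+ j).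
    rewrite [RHS]big_ord_recl /= mul0r mul0r add0r big_distrr /=; apply: eq_bigr => j _.
    rewrite /bump /= add1n exprS; ring.
  by rewrite big_ord_recr /= cc_big // mulr0 mul0r addr0.
rewrite mulrDl sh.
rewrite !big_distrr /= -big_split /= -sumrB.
apply: eq_bigr => j _.
have hj : (j <= k)%N by rewrite -ltnS.
have r := @cc_rec R d k j hkd hj.
have hD : (d%:R : R) - j%:R != 0.
  rewrite subr_eq0 eqr_nat; apply/negP => /eqP e; lia.
have -> : j.+1%:R * @cc R d k j.+1 = (k%:R - j%:R) ^+ 2 * cc d k j / (d%:R - j%:R).
  by rewrite -r; field.
by field.
Qed.
Lemma Hs_nonpos {R : realType} (d k t : nat) (y : R) : (k < d)%N -> (2 * k = d + t)%N ->
  (3 <= t)%N -> (75 * t <= d)%N -> 8 * t%:R / d%:R <= y ->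
  \sum_(j < k.+1) ((k%:R - j%:R) * ((2 * k%:R - d%:R) - j%:R) / (d%:R - j%:R)) * (@cc R d k j * y ^+ j) <= 0.
Proof.
move=> hkd hk ht3 h75 hy.
have eT : 2 * (k%:R : R) - d%:R = t%:R.
  apply/eqP; rewrite subr_eq -natrM -natrD; apply/eqP; congr (_%:R); lia.
rewrite eT.
set K : R := k%:R. set D : R := d%:R. set T : R := t%:R.
have T3 : 3 <= T by rewrite /T (ler_nat R 3 t).
have D75 : 75 * T <= D by rewrite /T /D -(natrM R 75 t) ler_nat.
have KDT : 2 * K = D + T by rewrite /K /D /T -natrM -natrD hk.
have Dpos : 0 < D by lra.
have y0 : 0 <= y by apply: le_trans hy; apply: divr_ge0; lra.
set phi := fun j : nat => (K - j%:R) / (D - j%:R) * (@cc R d k j * y ^+ j).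
have -> : \sum_(j < k.+1) (K - j%:R) * (T - j%:R) / (D - j%:R) * (cc d k j * y ^+ j)
   = \sum_(j < k.+1) (T - j%:R) * phi j.
  by apply: eq_bigr => j _; rewrite /phi; ring.
have rel : forall j, (j < k)%N ->
    j.+1%:R * phi j.+1 * (D - j%:R - 1) = y * (K - j%:R) * (K - j%:R - 1) * phi j.
  move=> j hj.
  have r := @cc_rec R d k j hkd (ltnW hj).
  have hjD : (j%:R : R) + 1 < D by rewrite natr1 /D ltr_nat; lia.
  have hD : D - j%:R != 0 by apply/lt0r_neq0; lra.
  have hD1 : D - j%:R - 1 != 0 by apply/lt0r_neq0; lra.
  rewrite /phi.
  rewrite -!natr1 in r *.
  have e1 : (j%:R + 1) * @cc R d k j.+1 = (K - j%:R) ^+ 2 * cc d k j / (D - j%:R).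
    by rewrite -r /D /K; field.
  rewrite exprS.
  transitivity ((K - (j%:R + 1)) * ((j%:R + 1) * @cc R d k j.+1) * (y * y ^+ j) *
     ((D - j%:R - 1) / (D - (j%:R + 1)))).
    by field; rewrite -addrA -opprD in hD1.
  rewrite e1 (_ : (D - j%:R - 1) / (D - (j%:R + 1)) = 1); last first.
    by rewrite opprD addrA divff.
  by field.
have phi0 : forall j, (j <= k)%N -> 0 <= phi j.
  move=> j hj; rewrite /phi; apply: mulr_ge0; last first.
    by apply: mulr_ge0; [exact: cc_ge0 | exact: exprn_ge0].
  have a : (j%:R : R) <= K by rewrite /K ler_nat.
  have b : (j%:R : R) <= D by rewrite /D ler_nat; lia.
  by apply: divr_ge0; lra.
set L := (3 * t)%N.
have hLk : (L < k)%N by rewrite /L; lia.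
have eL : (L.+1%:R : R) = 3 * T + 1 by rewrite /L -natr1 natrM.
have Kj : forall j, (j <= L)%N ->
    T * (D - j%:R - 1) * L.+1%:R <= y * (K - j%:R) * (K - j%:R - 1) * (L.+1%:R - T).
  move=> j hj.
  rewrite eL.
  have hjL : (j%:R : R) <= 3 * T by rewrite /T -(natrM R 3 t) ler_nat.
  have j0 : (0 : R) <= j%:R by [].
  have hK : K = (D + T) / 2 by lra.
  have hK1 : 1 <= K - 3 * T - 1 by rewrite hK; lra.
  have A : (K - 3 * T) * (K - 3 * T - 1) <= (K - j%:R) * (K - j%:R - 1) by nra.
  have C : 8 * ((K - 3 * T) * (K - 3 * T - 1)) = 2 * (D - 5 * T) * (D - 5 * T - 2).
    by rewrite hK; field.
  have N := @N1 R T D T3 D75.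
  have hDn0 : D != 0 by apply/lt0r_neq0.
  have yA : 8 * T / D * ((K - 3 * T) * (K - 3 * T - 1)) <= y * ((K - j%:R) * (K - j%:R - 1)).
    apply: ler_pM => //.
    - by apply: divr_ge0; lra.
    - by apply: mulr_ge0; lra.
  have e2 : 8 * T / D * ((K - 3 * T) * (K - 3 * T - 1)) * (2 * T + 1)
      = T / D * (2 * (D - 5 * T) * (D - 5 * T - 2) * (2 * T + 1)).
    by rewrite -C; field; exact: hDn0.
  have e3 : T / D * (D * (D - 1) * (3 * T + 1)) = T * (D - 1) * (3 * T + 1).
    by field; exact: hDn0.
  have s1 : T / D * (D * (D - 1) * (3 * T + 1)) <= T / D * (2 * (D - 5 * T) * (D - 5 * T - 2) * (2 * T + 1)).
    apply: ler_wpM2l; [apply: divr_ge0; lra | exact: N].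
  have s2 : 8 * T / D * ((K - 3 * T) * (K - 3 * T - 1)) * (2 * T + 1) <=
      y * ((K - j%:R) * (K - j%:R - 1)) * (2 * T + 1).
    by apply: ler_wpM2r => //; lra.
  have s3 : T * (D - j%:R - 1) * (3 * T + 1) <= T * (D - 1) * (3 * T + 1).
    by apply: ler_wpM2r; [lra|]; apply: ler_wpM2l; lra.
  have -> : 3 * T + 1 - T = 2 * T + 1 by lra.
  lra.
have Estar : forall j, (j <= L)%N ->
    T * L.+1%:R * phi j <= (L.+1%:R - T) * (j.+1%:R * phi j.+1).
  move=> j hj.
  have hjk : (j < k)%N by apply: leq_ltn_trans hLk.
  have p := phi0 j (ltnW hjk).
  have kj := Kj j hj.
  have rl := rel j hjk.
  have hjD : (j%:R : R) + 1 < D by rewrite natr1 /D ltr_nat; lia.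
  have hpos : 0 < D - j%:R - 1 by lra.
  have H := ler_wpM2r p kj.
  have E : y * (K - j%:R) * (K - j%:R - 1) * (L.+1%:R - T) * phi j
      = (L.+1%:R - T) * (j.+1%:R * phi j.+1) * (D - j%:R - 1).
    by rewrite mulrAC -rl; ring.
  rewrite -(ler_pM2r hpos) -E.
  by apply: le_trans H; rewrite le_eqVlt; apply/orP; left; apply/eqP; ring.
apply: (@LB R phi T k L) => //.
- by rewrite eL; lra.
- move=> j hj.
  have E := Estar j (ltnW hj).
  have q := phi0 j.+1 (leq_trans hj (ltnW hLk)).
  have hL0 : (0 : R) < L.+1%:R by [].
  have hq : 0 <= j.+1%:R * phi j.+1 by apply: mulr_ge0.
  have hT0 : 0 <= T * (j.+1%:R * phi j.+1) by apply: mulr_ge0 => //; lra.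
  rewrite -(ler_pM2l hL0).
  have e1 : L.+1%:R * (T * phi j) = T * L.+1%:R * phi j by ring.
  have e2 : L.+1%:R * (j.+1%:R * phi j.+1) = (L.+1%:R - T) * (j.+1%:R * phi j.+1) + T * (j.+1%:R * phi j.+1) by ring.
  rewrite e1 e2; lra.
- have E := Estar L (leqnn L).
  have hL0 : (0 : R) < L.+1%:R by [].
  rewrite -(ler_pM2l hL0) mulr0.
  have -> : L.+1%:R * (T * phi L + (T - L.+1%:R) * phi L.+1) =
     T * L.+1%:R * phi L - (L.+1%:R - T) * (L.+1%:R * phi L.+1) by ring.
  by rewrite subr_le0.
Qed.
Lemma f_le {R : realType} (d k : nat) (y : R) : (k < d)%N -> 0 <= y ->
  \sum_(j < k.+1) @cc R d k j * y ^+ j <= expR (k%:R ^+ 2 * y / d%:R).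
Proof.
move=> hkd y0.
set K : R := k%:R. set D : R := d%:R.
have Dpos : 0 < D by rewrite /D ltr0n; lia.
have KD : K <= D by rewrite /K /D ler_nat ltnW.
have Cpos : (0 : R) < ('C(d, k))%:R by rewrite ltr0n bin_gt0 ltnW.
have q_le : forall j, (j <= k)%N ->
    ('C(d - j, d - k))%:R / ('C(d, k))%:R <= (K / D) ^+ j :> R.
  elim=> [|j IH] hj.
    rewrite subn0 bin_sub; last exact: ltnW hkd.
    by rewrite divff ?expr0 //; apply/lt0r_neq0.
  have IH' := IH (ltnW hj).
  have e := mul_bin_down (d - j) (d - k).
  have -> : (d - j.+1 = (d - j).-1)%N by lia.
  have e3 : (d - j - (d - k) = k - j)%N by lia.
  rewrite e3 in e.
  have ec : (('C((d - j).-1, d - k))%:R : R) = (k - j)%:R / (d - j)%:R * ('C(d - j, d - k))%:R.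
    have hdj : ((d - j)%:R : R) != 0 by rewrite pnatr_eq0; lia.
    apply: (mulfI hdj); rewrite -natrM e natrM; field; exact: hdj.
  rewrite ec -mulrA exprS.
  apply: ler_pM.
  - by apply: divr_ge0.
  - by apply: divr_ge0.
  - have e1 : ((k - j)%:R : R) = K - j%:R by rewrite natrB //; lia.
    have e2 : ((d - j)%:R : R) = D - j%:R by rewrite natrB //; lia.
    rewrite e1 e2.
    rewrite ler_pdivrMr; last by rewrite subr_gt0 /D ltr_nat; lia.
    rewrite mulrAC ler_pdivlMr // -/K -/D.
    have : (j%:R : R) * K <= j%:R * D by apply: ler_wpM2l.
    lra.
  - exact: IH'.
have cc_le : forall j, (j <= k)%N -> @cc R d k j <= ('C(k, j))%:R * (K / D) ^+ j.
  move=> j hj; rewrite /cc natrM -mulrA; apply: ler_wpM2l => //; exact: q_le.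
apply: (@le_trans _ _ (\sum_(j < k.+1) ('C(k, j))%:R * (K / D) ^+ j * y ^+ j)).
  apply: ler_sum => j _; apply: ler_wpM2r; first exact: exprn_ge0.
  by apply: cc_le; rewrite -ltnS.
have -> : \sum_(j < k.+1) ('C(k, j))%:R * (K / D) ^+ j * y ^+ j = (K * y / D + 1) ^+ k.
  rewrite exprD1n; apply: eq_bigr => j _.
  rewrite -mulr_natl -mulrA -exprMn.
  by rewrite mulr1 mulr_natl mulrAC.
apply: (@le_trans _ _ (expR (K * y / D) ^+ k)).
  have u0 : 0 <= K * y / D by apply: divr_ge0 => //; apply: mulr_ge0 => //.
  apply: lerXn2r.
  - by rewrite nnegrE; lra.
  - by rewrite nnegrE expR_ge0.
  - by rewrite addrC expR_ge1Dx.
by rewrite -expRM_natl /K expr2 !mulrA.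
Qed.
Lemma B3 {R : realType} (T D K y : R) : 3 <= T -> expR (3 * T) <= D -> 2 * K = D + T ->
  0 <= y -> y < 8 * T / D -> T * (T - 1) * expR (K ^+ 2 * y / D) < D - T.
Proof.
move=> T3 hD hK y0 hy.
set E := expR T.
have E6 : (1 + T / 6) ^+ 6 <= E.
  have -> : E = expR (T / 6) ^+ 6 by rewrite -expRM_natl /E; congr expR; field.
  apply: lerXn2r; rewrite ?nnegrE ?expR_ge0 ?expR_ge1Dx //; lra.
have Epoly : 1 + T + 5 / 12 * T ^+ 2 + 5 / 54 * T ^+ 3 <= E.
  apply: le_trans E6.
  have a0 : 0 <= T / 6 by lra.
  have e : (1 + T / 6) ^+ 6 - (1 + T + 5 / 12 * T ^+ 2 + 5 / 54 * T ^+ 3)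
     = 15 * (T / 6) ^+ 4 + 6 * (T / 6) ^+ 5 + (T / 6) ^+ 6 by field.
  have q4 := exprn_ge0 4 a0. have q5 := exprn_ge0 5 a0. have q6 := exprn_ge0 6 a0.
  lra.
have E3 : expR (3 * T) = E ^+ 3 by rewrite -expRM_natl.
have q : 0 <= 5 / 54 * T ^+ 2 - 47 / 60 * T + 11 / 5.
  have := sqr_ge0 (T - 423 / 100); nra.
have E1 : 6 / 5 * T * (T - 1) + 1 <= E.
  have h : 0 <= T * (5 / 54 * T ^+ 2 - 47 / 60 * T + 11 / 5) by apply: mulr_ge0; lra.
  nra.
have E2 : 1 + T <= E by nra.
have E0 : 31 / 4 <= E by nra.
have Esq : 60 <= E ^+ 2 by nra.
have D25 : 25 * T ^+ 2 <= D.
  rewrite E3 in hD; apply: le_trans hD.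
  have h512 : 5 / 12 * T ^+ 2 <= E.
    have : 0 <= T + 5 / 54 * T ^+ 3 by nra.
    lra.
  have E0' : 0 <= E by lra.
  have := ler_wpM2l (sqr_ge0 E) h512.
  rewrite exprSr; nra.
have D75 : 75 * T <= D by nra.
have Dpos : 0 < D by nra.
have hb : K ^+ 2 * y / D <= 2 * T + 1 / 6.
  have hK2 : K ^+ 2 = (D + T) ^+ 2 / 4 by rewrite -hK; field.
  have s1 : K ^+ 2 * y / D <= K ^+ 2 * (8 * T / D) / D.
    apply: ler_wpM2r; first by rewrite invr_ge0; lra.
    by apply: ler_wpM2l; [apply: sqr_ge0|lra].
  apply: le_trans s1 _.
  have e : K ^+ 2 * (8 * T / D) / D = 2 * T + 4 * (T ^+ 2 / D) + 2 * (T ^+ 2 / D) * (T / D).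
    by rewrite hK2; field; apply/lt0r_neq0.
  rewrite e.
  have a : T ^+ 2 / D <= 1 / 25 by rewrite ler_pdivrMr //; lra.
  have b : T / D <= 1 / 75 by rewrite ler_pdivrMr //; lra.
  have a0 : 0 <= T ^+ 2 / D by apply: divr_ge0; lra.
  have b0 : 0 <= T / D by apply: divr_ge0; lra.
  nra.
have e16 : expR (1 / 6 : R) <= 6 / 5.
  have h := expR_ge1Dx (- (1 / 6) : R).
  have hp := expR_ge0 (1 / 6 : R).
  have m := expRxMexpNx_1 (1 / 6 : R).
  nra.
have ex : expR (K ^+ 2 * y / D) <= 6 / 5 * E ^+ 2.
  apply: (@le_trans _ _ (expR (2 * T + 1 / 6))).
    by rewrite ler_expR.
  rewrite expRD -expRM_natl -/E mulrC; apply: ler_wpM2r => //; exact: exprn_ge0 (expR_ge0 _).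
have TT : 0 <= T * (T - 1) by nra.
have s2 := ler_wpM2l TT ex.
apply: le_lt_trans s2 _.
rewrite E3 in hD.
have k1 : E ^+ 2 <= E ^+ 2 * (E - 6 / 5 * T * (T - 1)).
  by rewrite -{1}[E ^+ 2]mulr1; apply: ler_wpM2l; [apply: sqr_ge0 | lra].
have k2 : T < E ^+ 2 by nra.
have k3 : E ^+ 3 = E ^+ 2 * E by rewrite exprSr.
nra.
Qed.
Lemma G_term {R : realType} (K D T n : R) : 1 < K -> K < D -> 1 <= T -> 1 <= n -> n <= K ->
  (K - n) * (T - n) / (D - n) <= K * (T - 1) / D.
Proof.
move=> hK hKD hT hn1 hnK.
have Dn : 0 < D - n by lra.
have D0 : 0 < D by lra.
rewrite ler_pdivrMr // mulrAC ler_pdivlMr //.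
set G := (T - 1) * K * (D - n) - D * (K - n) * (T - n).
have e : (K - 1) * G = (K - n) * ((T - 1) * (D - K)) + (n - 1) * ((T - 1) * K * (D - K))
   + D * (K - 1) * ((n - 1) * (K - n)) by rewrite /G; ring.
have a : 0 <= (K - n) * ((T - 1) * (D - K)) by apply: mulr_ge0; [lra | apply: mulr_ge0; lra].
have b : 0 <= (n - 1) * ((T - 1) * K * (D - K)).
  by apply: mulr_ge0; [lra | apply: mulr_ge0; [apply: mulr_ge0|]; lra].
have c : 0 <= D * (K - 1) * ((n - 1) * (K - n)).
  by apply: mulr_ge0; [apply: mulr_ge0| apply: mulr_ge0]; lra.
have G0 : 0 <= G.
  have : 0 <= (K - 1) * G by lra.
  by rewrite pmulr_rge0 //; lra.
rewrite /G in G0; lra.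
Qed.

Lemma Hs_le {R : realType} (d k : nat) (y : R) : (1 < k)%N -> (k < d)%N -> 0 <= y ->
  1 <= 2 * (k%:R : R) - d%:R ->
  \sum_(j < k.+1) ((k%:R - j%:R) * ((2 * k%:R - d%:R) - j%:R) / (d%:R - j%:R)) * (@cc R d k j * y ^+ j)
  <= k%:R / d%:R * ((2 * k%:R - d%:R) * (\sum_(j < k.+1) @cc R d k j * y ^+ j)
                     - (\sum_(j < k.+1) @cc R d k j * y ^+ j) + 1).
Proof.
move=> hk1 hkd y0 hT.
set K : R := k%:R. set D : R := d%:R. set T := 2 * K - D.
have hK : 1 < K by rewrite /K ltr1n.
have hKD : K < D by rewrite /K /D ltr_nat.
have D0 : 0 < D by lra.
rewrite !big_ord_recl /= !expr0 !mulr1 (@cc0 R d k (ltnW hkd)) !subr0.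
set S2 := \sum_(i < k) cc d k (bump 0 i) * y ^+ bump 0 i.
set S1 := \sum_(i < k) _.
have : S1 <= K * (T - 1) / D * S2.
  rewrite /S1 /S2 big_distrr /=; apply: ler_sum => j _.
  apply: ler_wpM2r.
    by apply: mulr_ge0; [exact: cc_ge0 | exact: exprn_ge0].
  have hb : bump 0 j = j.+1 by rewrite /bump.
  rewrite hb; apply: G_term => //.
  - by rewrite -natr1 lerDr.
  - by rewrite /K ler_nat.
have e : K * T / D * 1 = K / D * (T - 1) + K / D by field; apply/lt0r_neq0.
move=> h.
rewrite e.
have -> : K / D * (T * (1 + S2) - (1 + S2) + 1) = K / D * (T - 1) + K / D + K / D * (T - 1) * S2 by ring.
lra.
Qed.
Lemma exp_poly {R : realType} (T : R) : 0 <= T ->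
  1 + T + 5 / 12 * T ^+ 2 + 5 / 54 * T ^+ 3 <= expR T.
Proof.
move=> T0.
have E6 : (1 + T / 6) ^+ 6 <= expR T.
  have -> : expR T = expR (T / 6) ^+ 6 by rewrite -expRM_natl; congr expR; field.
  apply: lerXn2r; rewrite ?nnegrE ?expR_ge0 ?expR_ge1Dx //; lra.
apply: le_trans E6.
have a0 : 0 <= T / 6 by lra.
have e : (1 + T / 6) ^+ 6 - (1 + T + 5 / 12 * T ^+ 2 + 5 / 54 * T ^+ 3)
   = 15 * (T / 6) ^+ 4 + 6 * (T / 6) ^+ 5 + (T / 6) ^+ 6 by field.
have q4 := exprn_ge0 4 a0. have q5 := exprn_ge0 5 a0. have q6 := exprn_ge0 6 a0.
lra.
Qed.

Lemma D75_lem {R : realType} (T D : R) : 3 <= T -> expR (3 * T) <= D -> 75 * T <= D.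
Proof.
move=> T3 hD.
have T0 : 0 <= T by lra.
have E := @exp_poly R T T0.
have E3 : expR (3 * T) = expR T ^+ 3 by rewrite -expRM_natl.
rewrite E3 in hD.
set e := expR T in E hD *.
have T2 : 9 <= T ^+ 2 by nra.
have T3' : 0 <= T ^+ 3 by apply: exprn_ge0; lra.
have e1 : 5 / 12 * T ^+ 2 <= e by lra.
have e2 : 1 + T <= e by lra.
have e0 : 0 <= e by lra.
have : (1 + T) * (1 + T) * (5 / 12 * T ^+ 2) <= e ^+ 3.
  rewrite (_ : e ^+ 3 = e * e * e); last by rewrite !exprS expr0 mulr1 mulrA.
  apply: ler_pM; [nra | nra | nra | exact: e1].
nra.
Qed.

Theorem lemma19 (R : realType) (d k : nat) :
  (404 <= d)%N ->
  d%:R / 2 + 1 < (k%:R : R) ->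
  (k%:R : R) <= d%:R / 2 + ln (d%:R : R) / 6 ->
  forall x : R, 1 < x ->
    (x + 1) * derive1 (fdk d k) x / k%:R < (1 + etadk d k x) * fdk d k x.
Proof.
move=> hd h2 h3 x hx.
have Dpos : (0 : R) < d%:R by rewrite ltr0n; lia.
have lnD : ln (d%:R : R) <= d%:R - 1.
  have := expR_ge1Dx (ln (d%:R : R)); rewrite lnK ?posrE //; lra.
have hkd : (k < d)%N by rewrite -(ltr_nat R); lra.
have hk3 : (d + 3 <= 2 * k)%N.
  have : ((d + 2)%N%:R : R) < (2 * k)%N%:R by rewrite natrD natrM; lra.
  by rewrite ltr_nat => h; lia.
have hk1 : (1 < k)%N by lia.
have hk0 : (0 < k)%N by lia.
set t := (2 * k - d)%N.
have hkt : (2 * k = d + t)%N by rewrite /t; lia.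
have t3 : (3 <= t)%N by rewrite /t; lia.
have eT : 2 * (k%:R : R) - d%:R = t%:R.
  apply/eqP; rewrite subr_eq -natrM -natrD; apply/eqP; congr (_%:R); lia.
have T3 : (3 : R) <= t%:R by rewrite (ler_nat R 3 t).
have hlog : 3 * (t%:R : R) <= ln (d%:R : R) by rewrite -eT; lra.
have hexp : expR (3 * (t%:R : R)) <= d%:R.
  by rewrite -[X in _ <= X](@lnK R) ?posrE // ler_expR.
have h75 : (75 * t <= d)%N.
  by rewrite -(ler_nat R) natrM; apply: D75_lem.
set y := x - 1.
have y0 : 0 < y by rewrite /y subr_gt0.
rewrite (_ : x = 1 + y); last by rewrite /y addrC subrK.
have hkd' := ltnW hkd.
rewrite /etadk (@fdk_y R d k y hkd') (@derive_fdk_y R d k y hkd').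
set f := \sum_(j < k.+1) @cc R d k j * y ^+ j.
set fp := \sum_(j < k.+1) j.+1%:R * @cc R d k j.+1 * y ^+ j.
have Hsid := @Hs_id R d k y hkd.
rewrite -/f -/fp eT in Hsid.
rewrite eT.
set Hs := \sum_(j < k.+1) _ in Hsid.
set T : R := t%:R in Hsid T3 hexp *.
set K : R := k%:R in Hsid h2 h3 *.
set D : R := d%:R in Hsid Dpos lnD h2 h3 hexp *.
have hKD : K < D by rewrite /K /D ltr_nat.
have Kpos : 0 < K by lra.
have fge : forall j, 0 <= @cc R d k j * y ^+ j.
  by move=> j; apply: mulr_ge0; [exact: cc_ge0 | apply: exprn_ge0; lra].
have hf1 : 1 < f.
  rewrite /f big_ord_recl /= expr0 mulr1 (@cc0 R d k hkd').
  rewrite (bigD1 (Ordinal hk0)) //=.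
  have p1 : 0 < @cc R d k (bump 0 0) * y ^+ bump 0 0.
    by rewrite /bump /= expr1; apply: mulr_gt0 => //; exact: cc1_pos.
  have p2 : 0 <= \sum_(i < k | i != Ordinal hk0) @cc R d k (bump 0 i) * y ^+ bump 0 i.
    by apply: sumr_ge0 => i _; exact: fge.
  lra.
have KDT : 2 * K = D + T by rewrite /K /D /T -eT; ring.
have key : Hs * (D - K + Num.sqrt ((D - K) ^+ 2 + D * T * f)) < K * T * f.
  set Q := D - K + Num.sqrt ((D - K) ^+ 2 + D * T * f).
  have sq0 := sqrtr_ge0 ((D - K) ^+ 2 + D * T * f).
  have Qpos : 0 < Q by rewrite /Q; lra.
  have KTf : 0 < K * T * f by apply: mulr_gt0; [apply: mulr_gt0|]; lra.
  have [Hn|Hp] := lerP Hs 0.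
    have : Hs * Q <= 0 by apply: mulr_le0_ge0 => //; lra.
    lra.
  have yb : y < 8 * T / D.
    rewrite ltNge; apply/negP => hy.
    have := @Hs_nonpos R d k t y hkd hkt t3 h75 hy.
    rewrite eT -/Hs; lra.
  have fle := @f_le R d k y hkd (ltW y0).
  have b3 := @B3 R T D K y T3 hexp KDT (ltW y0) yb.
  have TT : 0 <= T * (T - 1) by nra.
  have tf : T * (T - 1) * f < D - T.
    apply: le_lt_trans b3; exact: ler_wpM2l.
  have hT1 : 1 <= 2 * (k%:R : R) - d%:R by rewrite eT -/T; lra.
  have hle := @Hs_le R d k y hk1 hkd (ltW y0) hT1.
  rewrite eT -/Hs -/f in hle.
  have sq : Num.sqrt ((D - K) ^+ 2 + D * T * f) <= T * f + (D - K).
    rewrite -(@ger0_norm _ (T * f + (D - K))); last by nra.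
    rewrite -sqrtr_sqr ler_sqrt; last by apply: sqr_ge0.
    have e : (T * f + (D - K)) ^+ 2 - ((D - K) ^+ 2 + D * T * f)
       = T ^+ 2 * f * (f - 1) + T * f * (D + T - 2 * K) by ring.
    have : 0 <= T ^+ 2 * f * (f - 1) by apply: mulr_ge0; [apply: mulr_ge0|]; nra.
    rewrite KDT in e.
    have e2 : D + T - (D + T) = 0 by ring.
    rewrite e2 mulr0 addr0 in e.
    lra.
  have hQ : Q <= T * f + D - T by rewrite /Q; lra.
  have s1 : Hs * Q <= Hs * (T * f + D - T) by apply: ler_wpM2l; lra.
  have s2 : Hs * (T * f + D - T) <= K / D * (T * f - f + 1) * (T * f + D - T).
    apply: ler_wpM2r; [nra | exact: hle].
  have P : (T * f - f + 1) * (T * f + D - T) < T * f * D.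
    have e : T * f * D - (T * f - f + 1) * (T * f + D - T) = (f - 1) * ((D - T) - T * (T - 1) * f) by ring.
    have : 0 < (f - 1) * ((D - T) - T * (T - 1) * f) by apply: mulr_gt0; lra.
    lra.
  have s3 : K / D * (T * f - f + 1) * (T * f + D - T) < K * T * f.
    have KD0 : 0 < K / D by apply: divr_gt0.
    have := ltr_pM2l KD0; move=> h; rewrite -mulrA.
    apply: (@lt_le_trans _ _ (K / D * (T * f * D))).
      by rewrite h.
    rewrite le_eqVlt; apply/orP; left; apply/eqP; field; exact: lt0r_neq0.
  lra.
set Q := D - K + Num.sqrt ((D - K) ^+ 2 + D * T * f) in key *.
have sq0 := sqrtr_ge0 ((D - K) ^+ 2 + D * T * f).
have Qpos : 0 < Q by rewrite /Q; lra.
rewrite (_ : 1 + y + 1 = y + 2); last by ring.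
rewrite ltr_pdivrMr //.
have h : Hs < K * T * f / Q by rewrite ltr_pdivlMr.
have -> : (1 + T / Q) * f * K = K * f + K * T * f / Q.
  by field; exact: lt0r_neq0.
lra.
Qed.
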